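(* Let $\Sigma_{\mathsf f}\in\mathbb R^{n\times n}$ be symmetric positive definite and $\mu_{\mathsf f}\in\mathbb R^n$. Consider the system, noise model and affine disturbance feedback policy described in the context, with decision space $\mathscr D$. Then the set of $(\bar{\bm u},\bm{\mathcal K})\in\mathscr D$ for which the resulting closed-loop system satisfies both $\mathrm{var}_x(T)\preceq\Sigma_{\mathsf f}$ (i.e. $\Sigma_{\mathsf f}-\mathrm{var}_x(T)$ is positive semidefinite) and $\mu_x(T)=\mu_{\mathsf f}$ is a convex subset of $\mathscr D$.
   Context: System: $x(t+1)=A(t)x(t)+B(t)u(t)+w(t)$, $t\in\{0,\dots,T-1\}$, $x(0)=x_0\sim\mathcal N(\mu_0,\Sigma_0)$ with $\Sigma_0$ symmetric positive definite; $w(0),\dots,w(T-1)$ i.i.d. Gaussian with mean $0$ and covariance $W$ (symmetric positive semidefinite), uncorrelated across time, and $\mathbb E[x_0w(t)^\top]=0$. Policy: $u(0)=\bar u(0)$, $u(t)=\bar u(t)+\sum_{\tau=0}^{t-1}K_{(t-1,\tau)}w(\tau)$ for $t\in\{1,\dots,T-1\}$, with $K_{(t-1,\tau)}\in\mathbb R^{m\times n}$. $\bar{\bm u}$ is the vertical concatenation of $\bar u(0),\dots,\bar u(T-1)$; $\bm{\mathcal K}:=\begin{bmatrix}0&0\\ \mathbf K&0\end{bmatrix}\in\mathbb R^{Tm\times Tn}$ with $\mathbf K$ block lower triangular having $(i,j)$ block $K_{(i,j)}$, $0\le j\le i\le T-2$, so that the stacked input is $\bm u=\bar{\bm u}+\bm{\mathcal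 K}\bm w$ with $\bm w$ the concatenation of $w(0),\dots,w(T-1)$. $\mathscr D$ is the set of all pairs $(\bar{\bm u},\bm{\mathcal K})\in\mathbb R^{Tm}\times\mathbb R^{Tm\times Tn}$ with $\bm{\mathcal K}$ of this structure. $\mu_x(T)=\mathbb E[x(T)]$ and $\mathrm{var}_x(T)=\mathbb E[(x(T)-\mu_x(T))(x(T)-\mu_x(T))^\top]$; $\preceq$ is the Loewner order. *)

(* Defs.v *)
From HB Require Import structures.
From mathcomp Require Import all_boot all_order all_algebra.
From mathcomp Require Import all_classical all_reals all_analysis.
Set Implicit Arguments. Unset Strict Implicit. Unset Printing Implicit Defensive.
Import Order.TTheory GRing.Theory Num.Theory.
Local Open Scope classical_set_scope.
Local Open Scope ring_scope.

(* Block index: row i of block t in a stacked vector of T blocks of size m,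
   i.e. the index t*m + i of 'I_(T*m). *)
Lemma blk_proof (T m : nat) (t : 'I_T) (i : 'I_m) : (t * m + i < T * m)%N.
Proof.
have h1 : (t * m + i < t * m + m)%N by rewrite ltn_add2l.
apply: (leq_trans h1).
have -> : (t * m + m = t.+1 * m)%N by rewrite mulSn addnC.
by rewrite leq_mul2r ltn_ord orbT.
Qed.

Definition blk (T m : nat) (t : 'I_T) (i : 'I_m) : 'I_(T * m) :=
  Ordinal (blk_proof t i).

Section Defs.
Variables (R : realType) (T n m : nat).

Definition ubar_blk (ubar : 'cV[R]_(T * m)) (t : 'I_T) : 'cV[R]_m :=
  \col_i ubar (blk t i) 0.

Definition K_blk (Kc : 'M[R]_(T * m, T * n)) (t tau : 'I_T) : 'M[R]_(m, n) :=
  \matrix_(i, j) Kc (blk t i) (blk tau j).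

(* Structure of \mathcal K = [[0,0],[K,0]] with K block lower triangular:
   block (t, tau) may be nonzero only when tau < t (it is then K_{(t-1,tau)}). *)
Definition K_struct (Kc : 'M[R]_(T * m, T * n)) : Prop :=
  forall (t tau : 'I_T), (t <= tau)%N -> K_blk Kc t tau = 0.

Definition Dspace : set ('cV[R]_(T * m) * 'M[R]_(T * m, T * n))%type :=
  [set p | K_struct p.2].

Definition input (ubar : 'cV[R]_(T * m)) (Kc : 'M[R]_(T * m, T * n))
  {Om : Type} (w : 'I_T -> Om -> 'cV[R]_n) (t : 'I_T) (om : Om) : 'cV[R]_m :=
  ubar_blk ubar t + \sum_(tau < T) K_blk Kc t tau *m w tau om.

Fixpoint state (A : 'I_T -> 'M[R]_n) (B : 'I_T -> 'M[R]_(n, m))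
  (ubar : 'cV[R]_(T * m)) (Kc : 'M[R]_(T * m, T * n))
  {Om : Type} (x0 : Om -> 'cV[R]_n) (w : 'I_T -> Om -> 'cV[R]_n)
  (t : nat) (om : Om) : 'cV[R]_n :=
  match t with
  | 0 => x0 om
  | t'.+1 =>
    match insub t' : option 'I_T with
    | Some s => A s *m state A B ubar Kc x0 w t' om
                + B s *m input ubar Kc w s om + w s om
    | None => state A B ubar Kc x0 w t' om
    end
  end.

End Defs.

Section Moments.
Context {R : realType} {d : measure_display} {Om : measurableType d}.
Variable (P : probability Om R).

Definition mean_vec {k : nat} (X : Om -> 'cV[R]_k) : 'cV[R]_k :=
  \col_i fine ('E_P[fun om => X om i 0]).

Definition var_mat {k : nat} (X : Om -> 'cV[R]_k) : 'M[R]_k :=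
  \matrix_(i, j) fine (covariance P (fun om => X om i 0) (fun om => X om j 0)).

End Moments.

Definition symmetric {R : realType} {k : nat} (M : 'M[R]_k) : Prop := M^T = M.
Definition psd {R : realType} {k : nat} (M : 'M[R]_k) : Prop :=
  symmetric M /\ forall v : 'cV[R]_k, 0 <= (v^T *m M *m v) 0 0.
Definition pd {R : realType} {k : nat} (M : 'M[R]_k) : Prop :=
  symmetric M /\ forall v : 'cV[R]_k, v != 0 -> 0 < (v^T *m M *m v) 0 0.

Definition loewner_le {R : realType} {k : nat} (M1 M2 : 'M[R]_k) : Prop :=
  psd (M2 - M1).
Arguments Dspace R T n m : clear implicits.

(* Main.v *)
Require Import Defs.
From HB Require Import structures.
From mathcomp Require Import all_boot all_order all_algebra.
From mathcomp Require Import all_classical all_reals all_analysis.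
From mathcomp Require Import lra ring.
Import Order.TTheory GRing.Theory Num.Theory.
Local Open Scope classical_set_scope.
Local Open Scope ring_scope.
Set Implicit Arguments. Unset Strict Implicit.

Section Helpers.
Context {R : realType} {d : measure_display} {Om : measurableType d}.
Variable (P : probability Om R).
Local Notation L2 := (Lfun P 2%:E).

Lemma L2_of (f : Om -> R) : measurable_fun setT f ->
  P.-integrable setT (fun om => ((f om) ^+ 2)%:E) -> f \in L2.
Proof.
move=> mf /integrableP[_ fin].
rewrite inE; apply/andP; split; first by rewrite inE.
rewrite inE /= /finite_norm unlock /Lnorm.
rewrite poweR_lty//.
apply: le_lt_trans fin.
by under eq_integral => x _ do rewrite abse_EFin poweR_EFin powR_mulrn// -normrX -abse_EFin.
Qed.

Lemma L2_add (f g : Om -> R) : f \in L2 -> g \in L2 ->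
  (fun om => f om + g om) \in L2.
Proof. move=> hf hg. have H := rpredD hf hg. exact: (H (lee1n 2)). Qed.

Lemma L2_scale (a : R) (f : Om -> R) : f \in L2 -> (fun om => a * f om) \in L2.
Proof.
move=> hf; have -> : (fun om => a * f om) = a \o* f by apply/funext => x /=; rewrite mulrC.
by apply: Lfun_scale => //; rewrite ler1n.
Qed.

Lemma L2_cst (c : R) : (fun _ : Om => c) \in L2.
Proof. exact: Lfun_cst. Qed.

Lemma L2_sum (I : Type) (r : seq I) (F : I -> Om -> R) :
  (forall i, F i \in L2) -> (fun om => \sum_(i <- r) F i om) \in L2.
Proof.
move=> hF; elim: r => [|i r IH].
  by under eq_fun do rewrite big_nil; exact: L2_cst.
by under eq_fun do rewrite big_cons; exact: L2_add.
Qed.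


Definition fcov (X Y : Om -> R) : R := fine (covariance P X Y).

Lemma L2_L1 (f : Om -> R) : f \in L2 -> f \in Lfun P 1.
Proof. by apply: Lfun_subset12; exact: fin_num_measure. Qed.

Lemma cov_fin (X Y : Om -> R) : X \in L2 -> Y \in L2 ->
  covariance P X Y \is a fin_num.
Proof.
move=> hX hY; apply: covariance_fin_num; try exact: L2_L1.
exact: Lfun2_mul_Lfun1.
Qed.

Lemma fcovC (X Y : Om -> R) : fcov X Y = fcov Y X.
Proof. by rewrite /fcov covarianceC. Qed.

Lemma fcovDl (X Y Z : Om -> R) : X \in L2 -> Y \in L2 -> Z \in L2 ->
  fcov (fun om => X om + Y om) Z = fcov X Z + fcov Y Z.
Proof.
move=> hX hY hZ; rewrite /fcov.
have -> : (fun om => X om + Y om) = (X \+ Y)%R by [].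
by rewrite covarianceDl// fineD// cov_fin.
Qed.

Lemma fcovZl (a : R) (X Z : Om -> R) : X \in L2 -> Z \in L2 ->
  fcov (fun om => a * X om) Z = a * fcov X Z.
Proof.
move=> hX hZ; rewrite /fcov.
have -> : (fun om => a * X om) = (a \o* X)%R by apply/funext => x /=; rewrite mulrC.
rewrite covarianceZl//; try exact: L2_L1; last exact: Lfun2_mul_Lfun1.
by rewrite fineM// cov_fin.
Qed.

Lemma fcov_cstl (c : R) (Z : Om -> R) : fcov (fun _ => c) Z = 0.
Proof. by rewrite /fcov (covariance_cst_l P c Z). Qed.

Lemma fcov_suml (I : Type) (r : seq I) (c : I -> R) (F : I -> Om -> R) (Z : Om -> R) :
  (forall i, F i \in L2) -> Z \in L2 ->
  fcov (fun om => \sum_(i <- r) c i * F i om) Z = \sum_(i <- r) c i * fcov (F i) Z.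
Proof.
move=> hF hZ; elim: r => [|i r IH].
  by rewrite big_nil; under eq_fun do rewrite big_nil; exact: fcov_cstl.
rewrite big_cons -IH; under eq_fun do rewrite big_cons.
rewrite fcovDl//; first by rewrite fcovZl.
  exact: L2_scale.
by apply: L2_sum => j; exact: L2_scale.
Qed.

Lemma fcov_ge0 (X : Om -> R) : 0 <= fcov X X.
Proof. by rewrite /fcov fine_ge0// variance_ge0. Qed.

Lemma var_conv (Y1 Y2 : Om -> R) (t : R) : Y1 \in L2 -> Y2 \in L2 ->
  0 <= t -> t <= 1 ->
  fcov (fun om => t * Y1 om + (1 - t) * Y2 om) (fun om => t * Y1 om + (1 - t) * Y2 om)
  <= t * fcov Y1 Y1 + (1 - t) * fcov Y2 Y2.
Proof.
move=> h1 h2 t0 t1.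
have hs1 := L2_scale t h1; have hs2 := L2_scale (1 - t) h2.
have hY := L2_add hs1 hs2.
rewrite fcovDl// !fcovZl// ![fcov _ (fun om => _ + _)]fcovC.
rewrite !fcovDl// !fcovZl// (fcovC Y2 Y1).
have hD := fcov_ge0 (fun om => 1 * Y1 om + (-1) * Y2 om).
rewrite fcovDl ?fcovZl ?L2_scale ?L2_add// in hD.
rewrite ![fcov _ (fun om => _ + _)]fcovC in hD.
rewrite !fcovDl ?fcovZl ?L2_scale// (fcovC Y2 Y1) in hD.
have hts : 0 <= t * (1 - t) by apply: mulr_ge0; lra.
have := mulr_ge0 hts hD.
nra.
all: by apply: L2_scale.
Qed.


Definition L2mx {p q : nat} (X : Om -> 'M[R]_(p, q)) :=
  forall i j, (fun om => X om i j) \in L2.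

Lemma L2mx_mul {k p q : nat} (C : 'M[R]_(k, p)) (X : Om -> 'M[R]_(p, q)) :
  L2mx X -> L2mx (fun om => C *m X om).
Proof.
move=> h i j; under eq_fun do rewrite mxE.
by apply: L2_sum => l; apply: L2_scale.
Qed.

Lemma L2mx_add {p q : nat} (X Y : Om -> 'M[R]_(p, q)) :
  L2mx X -> L2mx Y -> L2mx (fun om => X om + Y om).
Proof. by move=> hX hY i j; under eq_fun do rewrite mxE; apply: L2_add. Qed.

Lemma L2mx_cst {p q : nat} (C : 'M[R]_(p, q)) : L2mx (fun _ => C).
Proof. by move=> i j; exact: L2_cst. Qed.

Lemma L2mx_sum {p q : nat} (I : Type) (r : seq I) (X : I -> Om -> 'M[R]_(p, q)) :
  (forall i, L2mx (X i)) -> L2mx (fun om => \sum_(i <- r) X i om).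
Proof.
move=> h i j; under eq_fun do rewrite summxE.
by apply: L2_sum => l; exact: h.
Qed.

Lemma state_L2 (T n m : nat) (A : 'I_T -> 'M[R]_n) (B : 'I_T -> 'M[R]_(n, m))
  (u : 'cV[R]_(T * m)) (K : 'M[R]_(T * m, T * n))
  (x0 : Om -> 'cV[R]_n) (w : 'I_T -> Om -> 'cV[R]_n) :
  L2mx x0 -> (forall t, L2mx (w t)) ->
  forall k, L2mx (state A B u K x0 w k).
Proof.
move=> h0 hw; elim => [|k IH] //=.
case: (insub k) => [s|//].
apply: L2mx_add; last exact: hw.
apply: L2mx_add; first exact: L2mx_mul.
apply: L2mx_mul; rewrite /input.
apply: L2mx_add; first exact: L2mx_cst.
by apply: L2mx_sum => tau; apply: L2mx_mul.
Qed.

End Helpers.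

Section Lin.
Variables (R : realType) (T n m : nat).

Lemma ubar_blk_lin (a b : R) (u1 u2 : 'cV[R]_(T * m)) (t : 'I_T) :
  ubar_blk (a *: u1 + b *: u2) t = a *: ubar_blk u1 t + b *: ubar_blk u2 t.
Proof. by apply/matrixP => i j; rewrite !mxE. Qed.

Lemma K_blk_lin (a b : R) (K1 K2 : 'M[R]_(T * m, T * n)) (t tau : 'I_T) :
  K_blk (a *: K1 + b *: K2) t tau = a *: K_blk K1 t tau + b *: K_blk K2 t tau.
Proof. by apply/matrixP => i j; rewrite !mxE. Qed.

Lemma input_lin (a b : R) (u1 u2 : 'cV[R]_(T * m)) (K1 K2 : 'M[R]_(T * m, T * n)) {Om : Type} (w : 'I_T -> Om -> 'cV[R]_n) s om :
  input (a *: u1 + b *: u2) (a *: K1 + b *: K2) w s om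
  = a *: input u1 K1 w s om + b *: input u2 K2 w s om.
Proof.
rewrite /input ubar_blk_lin.
under eq_bigr do rewrite K_blk_lin mulmxDl -!scalemxAl.
by rewrite big_split -!scaler_sumr !scalerDr addrACA.
Qed.

Lemma ac4 (V : zmodType) (x1 x2 y1 y2 z1 z2 : V) :
  x1 + x2 + (y1 + y2) + (z1 + z2) = x1 + y1 + z1 + (x2 + y2 + z2).
Proof. by rewrite (addrACA x1) (addrACA (x1 + y1)). Qed.

Lemma state_lin (A : 'I_T -> 'M[R]_n) (B : 'I_T -> 'M[R]_(n, m))
  (a b : R) (u1 u2 : 'cV[R]_(T * m)) (K1 K2 : 'M[R]_(T * m, T * n)) {Om : Type} (x0 : Om -> 'cV[R]_n) (w : 'I_T -> Om -> 'cV[R]_n) :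
  a + b = 1 -> forall k om,
  state A B (a *: u1 + b *: u2) (a *: K1 + b *: K2) x0 w k om
  = a *: state A B u1 K1 x0 w k om + b *: state A B u2 K2 x0 w k om.
Proof.
move=> hab; elim => [|k IH] om; cbn [state].
  by rewrite -scalerDl hab scale1r.
case: (insub k) => [s|//].
rewrite IH input_lin (mulmxDr (A s)) (mulmxDr (B s) (a *: input _ _ _ _ _)) -!scalemxAr.
rewrite -{1}[w s om]scale1r -hab scalerDl !scalerDr.
exact: ac4.
Qed.

End Lin.


Section More.
Context {R : realType} {d : measure_display} {Om : measurableType d}.
Variable (P : probability Om R).
Local Notation L2 := (Lfun P 2%:E).

Lemma qB {k : nat} (v : 'cV[R]_k) (M N : 'M[R]_k) :
  (v^T *m (M - N) *m v) 0 0 = (v^T *m M *m v) 0 0 - (v^T *m N *m v) 0 0.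
Proof. by rewrite mulmxBr mulmxBl !mxE. Qed.

Lemma fexp_conv (a b : R) (f g : Om -> R) : f \in L2 -> g \in L2 ->
  fine 'E_P[fun om => a * f om + b * g om] = a * fine 'E_P[f] + b * fine 'E_P[g].
Proof.
move=> hf hg.
have -> : (fun om => a * f om + b * g om) = ((a \o* f) \+ (b \o* g))%R.
  by apply/funext => x /=; rewrite mulrC (mulrC b).
have h1 : a \o* f \in Lfun P 1 by apply: Lfun_scale => //; exact: L2_L1.
have h2 : b \o* g \in Lfun P 1 by apply: Lfun_scale => //; exact: L2_L1.
rewrite expectationD// !expectationZl; try exact: L2_L1.
rewrite fineD ?fin_numM ?expectation_fin_num//; try exact: L2_L1.
by rewrite !fineM// expectation_fin_num//; exact: L2_L1.
Qed.

Lemma qform_var {k : nat} (X : Om -> 'cV[R]_k) (v : 'cV[R]_k) : L2mx P X ->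
  (v^T *m var_mat P X *m v) 0 0
  = fcov P (fun om => \sum_i v i 0 * X om i 0) (fun om => \sum_i v i 0 * X om i 0).
Proof.
move=> hX.
have hY : (fun om => \sum_i v i 0 * X om i 0) \in L2.
  by apply: L2_sum => i; apply: L2_scale; exact: hX.
rewrite fcov_suml //; try by move=> i; exact: hX.
under eq_bigr do (rewrite fcovC fcov_suml //; try by move=> j; exact: hX).
rewrite mxE; under [LHS]eq_bigr => j _ do rewrite mxE mulr_suml.
rewrite exchange_big; apply: eq_bigr => i _; rewrite mulr_sumr; apply: eq_bigr => j _.
rewrite !mxE /fcov covarianceC; ring.
Qed.

End More.

Unset Implicit Arguments. Set Strict Implicit.

Theorem proposition4 (R : realType) (T n m : nat)
  (A : 'I_T -> 'M[R]_n) (B : 'I_T -> 'M[R]_(n, m))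
  (mu0 : 'cV[R]_n) (Sigma0 W : 'M[R]_n)
  (d : measure_display) (Om : measurableType d) (P : probability Om R)
  (x0 : Om -> 'cV[R]_n) (w : 'I_T -> Om -> 'cV[R]_n)
  (Sigmaf : 'M[R]_n) (muf : 'cV[R]_n) :
  pd Sigma0 -> psd W -> pd Sigmaf ->
  (* measurability and finite first/second moments *)
  (forall i, measurable_fun setT (fun om => x0 om i 0)) ->
  (forall t i, measurable_fun setT (fun om => w t om i 0)) ->
  (forall i, P.-integrable setT (fun om => ((x0 om i 0) ^+ 2)%:E)) ->
  (forall t i, P.-integrable setT (fun om => ((w t om i 0) ^+ 2)%:E)) ->
  (* x0 has mean mu0 and covariance Sigma0 *)
  (forall i, ('E_P[(fun om => x0 om i 0)%R] = ((mu0 i 0)%R)%:E)%E) ->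
  (forall i j, covariance P (fun om => x0 om i 0) (fun om => x0 om j 0)
               = (Sigma0 i j)%:E) ->
  (* w(t) has mean 0, covariance W, uncorrelated across time *)
  (forall t i, ('E_P[(fun om => w t om i 0)%R] = 0)%E) ->
  (forall t s i j, covariance P (fun om => w t om i 0) (fun om => w s om j 0)
               = (if t == s then W i j else 0)%:E) ->
  (* E[x0 w(t)^T] = 0 *)
  (forall t i j, ('E_P[(fun om => x0 om i 0 * w t om j 0)%R] = 0)%E) ->
  (* x0 ~ N(mu0, Sigma0) (characteristic function) *)
  (forall a : 'cV[R]_n,
     ('E_P[(fun om => cos ((a^T *m x0 om) 0 0))%R]
       = (cos ((a^T *m mu0) 0 0) * expR (- ((a^T *m Sigma0 *m a) 0 0) / 2))%R%:E)%E /\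
     ('E_P[(fun om => sin ((a^T *m x0 om) 0 0))%R]
       = (sin ((a^T *m mu0) 0 0) * expR (- ((a^T *m Sigma0 *m a) 0 0) / 2))%R%:E)%E) ->
  (* w(0), ..., w(T-1) i.i.d. N(0, W) (joint characteristic function) *)
  (forall a : 'I_T -> 'cV[R]_n,
     ('E_P[(fun om => cos (\sum_(t < T) ((a t)^T *m w t om) 0 0))%R]
       = (expR (- (\sum_(t < T) ((a t)^T *m W *m a t) 0 0) / 2))%R%:E)%E /\
     ('E_P[(fun om => sin (\sum_(t < T) ((a t)^T *m w t om) 0 0))%R] = 0)%E) ->
  let S := [set p : ('cV[R]_(T * m) * 'M[R]_(T * m, T * n))%type |
             Dspace R T n m p /\
             loewner_le (var_mat P (state A B p.1 p.2 x0 w T)) Sigmaf /\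
             mean_vec P (state A B p.1 p.2 x0 w T) = muf] in
  S `<=` Dspace R T n m /\ convex_set S.


Proof.
move=> hS0 hW hSf mx0 mw ix0 iw _ _ _ _ _ _ _ S.
have hx0 : L2mx P x0 by move=> i j; rewrite (ord1 j); exact: L2_of.
have hw0 : forall t, L2mx P (w t) by move=> t i j; rewrite (ord1 j); exact: L2_of.
have hst := fun u K => state_L2 A B u K hx0 hw0 T.
split; first by move=> p [].
move=> [u1 K1] [u2 K2] l; rewrite !in_setE /S /= => -[D1 [V1 M1]] [D2 [V2 M2]].
have t0 : 0 <= l%:num by apply: ge0.
have t1 : l%:num <= 1 by apply: le1.
set t := l%:num in t0 t1 *.
have hab : t + (1 - t) = 1 by rewrite addrC subrK.
have -> : unstable.onem t = 1 - t by [].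
have HX := state_lin A B u1 u2 K1 K2 x0 w hab T.
set X1 := state A B u1 K1 x0 w T in HX V1 M1 *.
set X2 := state A B u2 K2 x0 w T in HX V2 M2 *.
set Xl := state A B _ _ x0 w T in HX *.
have hX1 : L2mx P X1 by exact: hst.
have hX2 : L2mx P X2 by exact: hst.
split; [|split].
- move=> a b hab'; rewrite /= K_blk_lin.
  by rewrite (D1 a b hab') (D2 a b hab') !scaler0 addr0.
- split.
    rewrite /symmetric; apply/matrixP => i j; rewrite !mxE covarianceC.
    by congr (_ - _); rewrite -[in RHS]hSf.1 mxE.
  move=> v; rewrite qB (qform_var v (hst _ _)).
  have q1 := V1.2 v; rewrite qB (qform_var v hX1) in q1.
  have q2 := V2.2 v; rewrite qB (qform_var v hX2) in q2.
  set Y1 := (fun om => \sum_i v i 0 * X1 om i 0) in q1.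
  set Y2 := (fun om => \sum_i v i 0 * X2 om i 0) in q2.
  have hY1 : Y1 \in Lfun P 2%:E by apply: L2_sum => i; apply: L2_scale; exact: hX1.
  have hY2 : Y2 \in Lfun P 2%:E by apply: L2_sum => i; apply: L2_scale; exact: hX2.
  have -> : (fun om => \sum_i v i 0 * Xl om i 0) = (fun om => t * Y1 om + (1 - t) * Y2 om).
    apply/funext => om; rewrite HX /Y1 /Y2 !mulr_sumr -big_split /=.
    by apply: eq_bigr => i _; rewrite !mxE; ring.
  have := var_conv hY1 hY2 t0 t1.
  nra.
- apply/matrixP => i j; rewrite (ord1 j) mxE.
  under eq_fun do rewrite HX !mxE.
  rewrite fexp_conv; [|exact: hX1|exact: hX2].
  have m1 : fine 'E_P[fun om => X1 om i 0] = muf i 0 by rewrite -M1 mxE.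
  have m2 : fine 'E_P[fun om => X2 om i 0] = muf i 0 by rewrite -M2 mxE.
  by rewrite m1 m2 -mulrDl hab mul1r.
Qed.
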